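(* Let $\mathcal{T}$ be a nilpotent Lie triple system of dimension $3$ over a field $\mathbb{F}$ of characteristic different from $2$. Then $\mathcal{T}$ is isomorphic to exactly one of: $\mathcal{T}_{3,1}$, the abelian Lie triple system (all products zero); or $\mathcal{T}_{3,2}$, with basis $e_1,e_2,e_3$ and nonzero products $[e_1,e_2,e_1]=e_3$, $[e_2,e_1,e_1]=-e_3$. *)

(* Defs.v *)
From HB Require Import structures.
From mathcomp Require Import all_boot all_order all_algebra.
Set Implicit Arguments. Unset Strict Implicit. Unset Printing Implicit Defensive.
Import GRing.Theory.
Local Open Scope ring_scope.

Definition triprod (F : fieldType) (V : vectType F) := V -> V -> V -> V.

Section LTS.
Variables (F : fieldType) (V : vectType F).

Definition trilinear (p : triprod V) : Prop :=
  [/\ forall (a : F) x x' y z, p (a *: x + x') y z = a *: p x y z + p x' y z,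
      forall (a : F) x y y' z, p x (a *: y + y') z = a *: p x y z + p x y' z
    & forall (a : F) x y z z', p x y (a *: z + z') = a *: p x y z + p x y z'].

Definition is_LTS (p : triprod V) : Prop :=
  [/\ trilinear p,
      forall x z, p x x z = 0,
      forall x y z, p x y z + p y z x + p z x y = 0
    & forall u v x y z,
        p u v (p x y z) = p (p u v x) y z + p x (p u v y) z + p x y (p u v z)].

(* Lower central series: lcs p 0 = T, lcs p (k+1) = span [lcs p k, T, T],
   the span being the smallest subspace containing all such products. *)
Fixpoint lcs (p : triprod V) (k : nat) : V -> Prop :=
  match k with
  | 0 => fun _ => True
  | k'.+1 => fun w => forall U : {vspace V},
      (forall a b c, lcs p k' a -> p a b c \in U) -> w \in U
  end.

Definition nilpotent_LTS (p : triprod V) : Prop :=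
  exists n, forall w, lcs p n w -> w = 0.

End LTS.

Definition LTS_iso (F : fieldType) (V W : vectType F)
  (p : triprod V) (q : triprod W) : Prop :=
  exists f : V -> W,
    [/\ forall (a : F) x y, f (a *: x + y) = a *: f x + f y,
        bijective f
      & forall x y z, f (p x y z) = q (f x) (f y) (f z)].

(* Standard basis of F^3 (row vectors); e_1,e_2,e_3 are indices 0,1,2. *)
Definition i1 : 'I_3 := Ordinal (isT : (0 < 3)%N).
Definition i2 : 'I_3 := Ordinal (isT : (1 < 3)%N).
Definition i3 : 'I_3 := Ordinal (isT : (2 < 3)%N).
Definition ebasis (F : fieldType) (i : 'I_3) : 'rV[F]_3 := delta_mx 0 i.

Definition T31 (F : fieldType) : triprod 'rV[F]_3 := fun _ _ _ => 0.

(* T_{3,2}: the trilinear extension of [e1,e2,e1] = e3, [e2,e1,e1] = -e3,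
   all other products of basis vectors zero. *)
Definition T32 (F : fieldType) : triprod 'rV[F]_3 := fun x y z =>
  ((x 0 i1 * y 0 i2 - x 0 i2 * y 0 i1) * z 0 i1) *: ebasis F i3.

(* Main.v *)
Require Import Defs.
From HB Require Import structures.
From mathcomp Require Import all_boot all_order all_algebra.
Import GRing.Theory.
Local Open Scope ring_scope.
Set Implicit Arguments. Unset Strict Implicit.

Section Basic.
Variables (F : fieldType) (V : vectType F) (p : triprod V).
Hypothesis tri : trilinear p.

Lemma pD1 x x' y z : p (x + x') y z = p x y z + p x' y z.
Proof. by case: tri => H _ _; have := H 1 x x' y z; rewrite !scale1r. Qed.
Lemma pD2 x y y' z : p x (y + y') z = p x y z + p x y' z.
Proof. by case: tri => _ H _; have := H 1 x y y' z; rewrite !scale1r. Qed.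
Lemma pD3 x y z z' : p x y (z + z') = p x y z + p x y z'.
Proof. by case: tri => _ _ H; have := H 1 x y z z'; rewrite !scale1r. Qed.

Lemma zero_lem (v : V) : v = v + v -> v = 0.
Proof. by move=> h; apply: (@addrI _ v); rewrite addr0 -h. Qed.

Lemma p0_1 y z : p 0 y z = 0.
Proof. by apply: zero_lem; rewrite -pD1 addr0. Qed.
Lemma p0_2 x z : p x 0 z = 0.
Proof. by apply: zero_lem; rewrite -pD2 addr0. Qed.
Lemma p0_3 x y : p x y 0 = 0.
Proof. by apply: zero_lem; rewrite -pD3 addr0. Qed.
Lemma pZ1 a x y z : p (a *: x) y z = a *: p x y z.
Proof. by case: tri => H _ _; have := H a x 0 y z; rewrite !addr0 p0_1 addr0. Qed.
Lemma pZ2 a x y z : p x (a *: y) z = a *: p x y z.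
Proof. by case: tri => _ H _; have := H a x y 0 z; rewrite !addr0 p0_2 addr0. Qed.
Lemma pZ3 a x y z : p x y (a *: z) = a *: p x y z.
Proof. by case: tri => _ _ H; have := H a x y z 0; rewrite !addr0 p0_3 addr0. Qed.
Lemma pN1 x y z : p (- x) y z = - p x y z.
Proof. by rewrite -scaleN1r pZ1 scaleN1r. Qed.
Lemma pN2 x y z : p x (- y) z = - p x y z.
Proof. by rewrite -scaleN1r pZ2 scaleN1r. Qed.
Lemma pB1 x x' y z : p (x - x') y z = p x y z - p x' y z.
Proof. by rewrite pD1 pN1. Qed.
Lemma pB2 x y y' z : p x (y - y') z = p x y z - p x y' z.
Proof. by rewrite pD2 pN2. Qed.
Lemma pB3 x y z z' : p x y (z - z') = p x y z - p x y z'.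
Proof. by rewrite pD3 -scaleN1r pZ3 scaleN1r. Qed.

Hypothesis alt : forall x z, p x x z = 0.
Lemma pskew x y z : p x y z = - p y x z.
Proof.
have := alt (x + y) z; rewrite pD1 !pD2 !alt add0r addr0 => /eqP.
by rewrite addr_eq0 => /eqP.
Qed.
End Basic.

Section LinExp.
Variables (F : fieldType) (V : vectType F) (M : lmodType F).

Definition semilin (g : V -> M) := forall (a : F) x y, g (a *: x + y) = a *: g x + g y.

Lemma sl_D g : semilin g -> forall x y, g (x + y) = g x + g y.
Proof. by move=> h x y; have := h 1 x y; rewrite !scale1r. Qed.
Lemma sl_0 g : semilin g -> g 0 = 0.
Proof.
move=> h; have := sl_D h 0 0; rewrite addr0 => e.
by apply: (@addrI _ (g 0)); rewrite addr0 -e.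
Qed.
Lemma sl_Z g : semilin g -> forall a x, g (a *: x) = a *: g x.
Proof. by move=> h a x; have := h a x 0; rewrite !addr0 sl_0 // addr0. Qed.

Lemma lin_exp g n (X : n.-tuple V) v : semilin g -> v \in <<X>>%VS ->
  g v = \sum_i coord X i v *: g X`_i.
Proof.
move=> h Hv; rewrite {1}(coord_span Hv).
rewrite (big_morph g (sl_D h) (sl_0 h)).
by apply: eq_bigr => i _; rewrite sl_Z.
Qed.

Lemma lin_zero g n (X : n.-tuple V) v : semilin g -> v \in <<X>>%VS ->
  (forall i : 'I_n, g X`_i = 0) -> g v = 0.
Proof.
move=> h Hv H0; rewrite (lin_exp h Hv) big1 // => i _.
by rewrite H0 scaler0.
Qed.
End LinExp.

Section TriUniq.
Variables (F : fieldType) (V : vectType F) (M : lmodType F).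
Variables (n : nat) (X : n.-tuple V).
Hypothesis Xsp : forall v, v \in <<X>>%VS.

Lemma tri_zero (g : V -> V -> V -> M) :
  (forall y z, semilin (fun x => g x y z)) ->
  (forall x z, semilin (fun y => g x y z)) ->
  (forall x y, semilin (fun z => g x y z)) ->
  (forall i j k : 'I_n, g X`_i X`_j X`_k = 0) -> forall x y z, g x y z = 0.
Proof.
move=> h1 h2 h3 H x y z.
have H1 : forall (j k : 'I_n) x, g x X`_j X`_k = 0.
  by move=> j k x'; apply: (lin_zero (h1 _ _) (Xsp x')) => i; apply: H.
have H2 : forall (k : 'I_n) x y, g x y X`_k = 0.
  by move=> k x' y'; apply: (lin_zero (h2 _ _) (Xsp y')) => j; apply: H1.
by apply: (lin_zero (h3 _ _) (Xsp z)) => k; apply: H2.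
Qed.
End TriUniq.

Section Iso.
Variables (F : fieldType) (V : vectType F).
Variable (X : 3.-tuple V).
Hypothesis Xb : basis_of fullv X.

Definition cf (v : V) : 'rV[F]_3 := \row_i coord X i v.

Lemma cf_lin : semilin cf.
Proof. by move=> a x y; apply/rowP => i; rewrite !mxE linearP. Qed.

Lemma Xsp v : v \in <<X>>%VS.
Proof. by rewrite (span_basis Xb) memvf. Qed.

Lemma Xfree : free X.
Proof. exact: basis_free Xb. Qed.

Lemma cf_bij : bijective cf.
Proof.
exists (fun r : 'rV[F]_3 => \sum_i r 0 i *: X`_i).
  by move=> v; rewrite [RHS](coord_span (Xsp v)); apply: eq_bigr => i _; rewrite mxE.
move=> r; apply/rowP => j; rewrite mxE.
by rewrite (coord_sum_free (fun i => r 0 i) j Xfree).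
Qed.

Lemma cf_X (i : 'I_3) : cf X`_i = ebasis F i.
Proof.
apply/rowP => j; rewrite !mxE coord_free ?Xfree //.
by rewrite eq_sym.
Qed.

Lemma iso_of (p : triprod V) (q : triprod 'rV[F]_3) : trilinear p ->
  (forall y z, semilin (fun x => q x y z)) ->
  (forall x z, semilin (fun y => q x y z)) ->
  (forall x y, semilin (fun z => q x y z)) ->
  (forall i j k : 'I_3, cf (p X`_i X`_j X`_k) = q (ebasis F i) (ebasis F j) (ebasis F k)) ->
  LTS_iso p q.
Proof.
move=> tp h1 h2 h3 H; exists cf; split; [exact: cf_lin | exact: cf_bij |].
move=> x y z; apply/eqP; rewrite -subr_eq0; apply/eqP.
pose g x y z := cf (p x y z) - q (cf x) (cf y) (cf z).
apply: (@tri_zero F V _ 3 X Xsp g) => [y' z' a u v|x' z' a u v|x' y' a u v|i j k].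
- case: tp => t1 _ _; rewrite /g t1 !cf_lin h1.
  by rewrite scalerBr addrACA opprD.
- case: tp => _ t2 _; rewrite /g t2 !cf_lin h2.
  by rewrite scalerBr addrACA opprD.
- case: tp => _ _ t3; rewrite /g t3 !cf_lin h3.
  by rewrite scalerBr addrACA opprD.
by rewrite /g H !cf_X subrr.
Qed.
End Iso.

From mathcomp Require Import ring.

Section T32lin.
Variable F : fieldType.

Lemma T32_l1 y z : semilin (fun x => @T32 F x y z).
Proof.
move=> a x x'; rewrite /T32 !mxE scalerA -scalerDl; congr (_ *: _); ring.
Qed.
Lemma T32_l2 x z : semilin (fun y => @T32 F x y z).
Proof.
move=> a y y'; rewrite /T32 !mxE scalerA -scalerDl; congr (_ *: _); ring.
Qed.
Lemma T32_l3 x y : semilin (fun z => @T32 F x y z).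
Proof.
move=> a z z'; rewrite /T32 !mxE scalerA -scalerDl; congr (_ *: _); ring.
Qed.
Lemma T31_l1 y z : semilin (fun x => @T31 F x y z).
Proof. by move=> *; rewrite /T31 scaler0 addr0. Qed.
Lemma T31_l2 x z : semilin (fun y => @T31 F x y z).
Proof. by move=> *; rewrite /T31 scaler0 addr0. Qed.
Lemma T31_l3 x y : semilin (fun z => @T31 F x y z).
Proof. by move=> *; rewrite /T31 scaler0 addr0. Qed.

End T32lin.

Section Iso32.
Variables (F : fieldType) (V : vectType F) (p : triprod V).
Variable (X : 3.-tuple V).
Hypothesis Xb : basis_of fullv X.
Hypothesis tri : trilinear p.
Hypothesis alt : forall x z, p x x z = 0.
Hypothesis jac : forall x y z, p x y z + p y z x + p z x y = 0.
Hypothesis eA : forall y z, p X`_2 y z = 0.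
Hypothesis P1 : p X`_0 X`_1 X`_0 = X`_2.
Hypothesis P2 : p X`_0 X`_1 X`_1 = 0.

Lemma eB y z : p y X`_2 z = 0.
Proof. by rewrite (pskew tri alt) eA oppr0. Qed.
Lemma eC y z : p y z X`_2 = 0.
Proof. by have := jac y z X`_2; rewrite eB eA !addr0. Qed.
Lemma P3 : p X`_1 X`_0 X`_0 = - X`_2.
Proof. by rewrite (pskew tri alt) P1. Qed.
Lemma P4 : p X`_1 X`_0 X`_1 = 0.
Proof. by rewrite (pskew tri alt) P2 oppr0. Qed.

Lemma iso32 : LTS_iso p (@T32 F).
Proof.
apply: (iso_of Xb tri (@T32_l1 F) (@T32_l2 F) (@T32_l3 F)) => i j k.
have c2 : cf X X`_2 = ebasis F i3 by exact: (cf_X Xb i3).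
have c0 : cf X 0 = 0 by apply: sl_0 (cf_lin X).
have c2N : cf X (- X`_2) = - ebasis F i3.
  by rewrite -scaleN1r (sl_Z (cf_lin X)) c2 scaleN1r.
case: i => [[|[|[|//]]] Hi]; case: j => [[|[|[|//]]] Hj]; case: k => [[|[|[|//]]] Hk];
  rewrite /= ?alt ?eA ?eB ?eC ?P1 ?P2 ?P3 ?P4 ?c0 ?c2 ?c2N /T32 /ebasis !mxE /=;
  by rewrite ?(mul0r,mulr0,mul1r,mulr1,subrr,subr0,sub0r,oppr0,scale0r,scale1r,scaleN1r).
Qed.
End Iso32.

Section TriMem.
Variables (F : fieldType) (V : vectType F).
Variables (n : nat) (X : n.-tuple V).
Hypothesis Xsp : forall v, v \in <<X>>%VS.

Lemma lin_mem (g : V -> V) (U : {vspace V}) v : semilin g ->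
  (forall i : 'I_n, g X`_i \in U) -> g v \in U.
Proof.
move=> h H; rewrite (lin_exp h (Xsp v)); apply: memv_suml => i _.
exact/memvZ/H.
Qed.

Lemma tri_mem (g : V -> V -> V -> V) (U : {vspace V}) :
  (forall y z, semilin (fun x => g x y z)) ->
  (forall x z, semilin (fun y => g x y z)) ->
  (forall x y, semilin (fun z => g x y z)) ->
  (forall i j k : 'I_n, g X`_i X`_j X`_k \in U) -> forall x y z, g x y z \in U.
Proof.
move=> h1 h2 h3 H x y z.
have H1 : forall (j k : 'I_n) x, g x X`_j X`_k \in U.
  by move=> j k x'; apply: (lin_mem _ (h1 _ _)) => i; apply: H.
have H2 : forall (k : 'I_n) x y, g x y X`_k \in U.
  by move=> k x' y'; apply: (lin_mem _ (h2 _ _)) => j; apply: H1.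
by apply: (lin_mem _ (h3 _ _)) => k; apply: H2.
Qed.
End TriMem.

Section Sl.
Variables (F : fieldType) (V : vectType F) (p : triprod V).
Hypothesis tri : trilinear p.
Lemma psl1 y z : semilin (fun x => p x y z).
Proof. by case: tri => h _ _ a u v; apply: h. Qed.
Lemma psl2 x z : semilin (fun y => p x y z).
Proof. by case: tri => _ h _ a u v; apply: h. Qed.
Lemma psl3 x y : semilin (fun z => p x y z).
Proof. by case: tri => _ _ h a u v; apply: h. Qed.
End Sl.

Section NonIso.
Variables (F : fieldType) (V : vectType F) (p : triprod V).

Lemma not_iso32 : (forall x y z, p x y z = 0) -> ~ LTS_iso p (@T32 F).
Proof.
move=> H [f [fl [g fg gf] fp]].
have f0 : f 0 = 0 by apply: (sl_0 fl).
have := fp (g (ebasis F i1)) (g (ebasis F i2)) (g (ebasis F i1)).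
rewrite H f0 !gf => /(congr1 (fun r : 'rV[F]_3 => r 0 i3)).
by rewrite /T32 /ebasis !mxE /= !(mulr1,mulr0,subr0) => /eqP; rewrite eq_sym oner_eq0.
Qed.

Lemma not_iso31 x y z : p x y z != 0 -> ~ LTS_iso p (@T31 F).
Proof.
move=> nz [f [fl [g fg gf] fp]].
have f0 : f 0 = 0 by apply: (sl_0 fl).
have := fp x y z; rewrite /T31 -f0 => /(congr1 g); rewrite !fg => e.
by move: nz; rewrite e eqxx.
Qed.
End NonIso.

Section Final.
Variables (F : fieldType) (V : vectType F) (p : triprod V).
Hypothesis tri : trilinear p.
Hypothesis alt : forall x z, p x x z = 0.
Hypothesis jac : forall x y z, p x y z + p y z x + p z x y = 0.
Hypothesis Hd : \dim (fullv : {vspace V}) = 3%N.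
Variables (x y e : V) (a b : F).
Hypothesis Hsp : (fullv <= <<[:: x; y; e]>>)%VS.
Hypothesis enz : e != 0.
Hypothesis eA : forall u v, p e u v = 0.
Hypothesis ha : p x y x = a *: e.
Hypothesis hb : p x y y = b *: e.
Hypothesis anz : a != 0.

Lemma final : ~ LTS_iso p (@T31 F) /\ LTS_iso p (@T32 F).
Proof.
set c := b / a.
pose Y := [tuple x; y - c *: x; a *: e].
have HY : basis_of fullv Y.
  rewrite basisEdim Hd size_tuple leqnn andbT.
  apply: (subv_trans Hsp); apply/span_subvP => v.
  rewrite !inE => /or3P [/eqP->|/eqP->|/eqP->].
  - by apply: memv_span; rewrite !inE eqxx.
  - have -> : y = (y - c *: x) + c *: x by rewrite subrK.
    apply: memvD; first by apply: memv_span; rewrite !inE eqxx orbT.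
    by apply: memvZ; apply: memv_span; rewrite !inE eqxx.
  - have -> : e = a^-1 *: (a *: e) by rewrite scalerA mulVf // scale1r.
    by apply: memvZ; apply: memv_span; rewrite !inE eqxx !orbT.
have P1 : p Y`_0 Y`_1 Y`_0 = Y`_2.
  by rewrite /= (pB2 tri) (pZ2 tri) alt scaler0 subr0.
split.
  apply: (not_iso31 (x:=Y`_0) (y:=Y`_1) (z:=Y`_0)).
  by rewrite P1 /= scaler_eq0 negb_or anz.
apply: (iso32 HY tri alt jac) => //.
- by move=> u v; rewrite /= (pZ1 tri) eA scaler0.
- rewrite /= !(pB2 tri, pB3 tri, pZ2 tri, pZ3 tri, alt) ha hb.
  rewrite !(scaler0, subr0) scalerA /c divfK // subrr.
- done.
Qed.
End Final.

Section Main.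
Variables (F : fieldType) (V : vectType F) (p : triprod V).
Hypothesis tri : trilinear p.
Hypothesis alt : forall x z, p x x z = 0.
Hypothesis jac : forall x y z, p x y z + p y z x + p z x y = 0.
Hypothesis nil : nilpotent_LTS p.
Hypothesis Hd : \dim (fullv : {vspace V}) = 3%N.

Let Hs : size (vbasis (fullv : {vspace V})) == 3%N.
Proof. by rewrite size_tuple Hd. Qed.
Let X0 : 3.-tuple V := Tuple Hs.
Let X0b : basis_of fullv X0 := vbasisP fullv.
Let X0sp v : v \in <<X0>>%VS := Xsp X0b v.

Let gens := [seq p X0`_t.1.1 X0`_t.1.2 X0`_t.2 | t : ('I_3 * 'I_3) * 'I_3].
Let W := <<gens>>%VS.

Lemma W1 a b c : p a b c \in W.
Proof.
apply: (tri_mem X0sp (psl1 tri) (psl2 tri) (psl3 tri)) => i j k.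
by apply: memv_span; apply/imageP; exists ((i, j), k).
Qed.

Lemma Wsub (U : {vspace V}) : (forall a b c, p a b c \in U) -> (W <= U)%VS.
Proof. by move=> H; apply/span_subvP => v /imageP [t _ ->]. Qed.

Lemma lcs1W w : lcs p 1 w -> w \in W.
Proof. by move=> H; apply: H => a b c _; apply: W1. Qed.

Lemma Wlcs1 w : w \in W -> lcs p 1 w.
Proof. by move=> Hw U HU; apply: (subvP (Wsub (fun a b c => HU a b c I))). Qed.

Lemma key : (forall U : {vspace V}, (forall a b c, lcs p 1 a -> p a b c \in U) ->
  (W <= U)%VS) -> W = 0%VS.
Proof.
move=> H.
have cl : forall k w, w \in W -> lcs p k.+1 w.
  elim=> [|k IH] w Hw; first exact: Wlcs1.
  move=> U HU; apply: (subvP (H U _)) Hw => a b c /lcs1W Ha.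
  by apply: HU; apply: IH.
case: nil => n N; apply/eqP; rewrite -subv0; apply/subvP => w Hw.
rewrite memv0; apply/eqP; apply: N.
by case: n => [|k] //; apply: cl.
Qed.

Lemma W_le1 : (\dim W <= 1)%N.
Proof.
rewrite leqNgt; apply/negP => d2.
have dC : (\dim (W^C)%VS <= 1)%N by rewrite dimv_compl Hd leq_subLR addn1 ltnS.
pose x := vpick (W^C)%VS.
have Cx : ((W^C)%VS <= <[x]>)%VS.
  case: (eqVneq (W^C)%VS 0%VS) => [->|nz]; first exact: sub0v.
  suff /eqP -> : <[x]>%VS == (W^C)%VS by [].
  by rewrite eqEdim -memvE memv_pick dim_vline vpick0 nz.
have full v : v \in (W + <[x]>)%VS.
  by apply: (subvP (addvS (subvv W) Cx)); rewrite addv_complf memvf.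
have W0 : W = 0%VS.
  apply: key => U HU; apply: Wsub => a b c.
  case/memv_addP: (full a) => a' Ha' [a2 /vlineP [al ->] ->].
  case/memv_addP: (full b) => b' Hb' [b2 /vlineP [be ->] ->].
  rewrite (pD1 tri) (pZ1 tri); apply: memvD; first by apply: HU; apply: Wlcs1.
  apply: memvZ; rewrite (pD2 tri) (pZ2 tri) alt scaler0 addr0 (pskew tri alt) memvN.
  by apply: HU; apply: Wlcs1.
by move: d2; rewrite W0 dimv0.
Qed.

Lemma main_res :
  (LTS_iso p (@T31 F) /\ ~ LTS_iso p (@T32 F)) \/
  (~ LTS_iso p (@T31 F) /\ LTS_iso p (@T32 F)).
Proof.
have cf0 : cf X0 0 = 0 by apply: sl_0 (cf_lin X0).
have := W_le1; rewrite leq_eqVlt ltnS leqn0 => /orP [/eqP d|/eqP d]; last first.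
  have W0 : W = 0%VS by apply/eqP; rewrite -dimv_eq0 d.
  have P0 a b c : p a b c = 0 by apply/eqP; rewrite -memv0 -W0 W1.
  left; split; last exact: not_iso32.
  apply: (iso_of X0b tri (@T31_l1 F) (@T31_l2 F) (@T31_l3 F)) => i j k.
  by rewrite P0 cf0.
pose e := vpick W.
have enz : e != 0 by rewrite vpick0 -dimv_eq0 d.
have We : W = <[e]>%VS.
  by apply/eqP; rewrite eq_sym eqEdim -memvE memv_pick dim_vline enz d.
have inW w : w \in W -> exists k, w = k *: e by rewrite We => /vlineP.
have Wn0 : W != 0%VS by rewrite -vpick0.
have eA u v : p e u v = 0.
  have [l Hl] := inW _ (W1 e u v).
  case: (eqVneq l 0) => [l0|lnz]; first by rewrite Hl l0 scale0r.
  suff W0 : W = 0%VS by move: Wn0; rewrite W0 eqxx.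
  apply: key => U HU; rewrite We -memvE.
  have := HU e u v (Wlcs1 (memv_pick W)); rewrite Hl => h.
  have -> : e = l^-1 *: (l *: e) by rewrite scalerA mulVf // scale1r.
  exact: memvZ.
pose C := (<[e]>^C)%VS.
have dC : \dim C = 2%N by rewrite dimv_compl Hd dim_vline enz.
have Sz : size (vbasis C) = 2%N by rewrite size_tuple dC.
have Sb : <<vbasis C>>%VS = C := span_basis (vbasisP C).
move: (vbasis C : seq V) Sz Sb => s.
case: s => [|x [|y [|? ?]]] //= _ Sb.
have Hsp : (fullv <= <<[:: x; y; e]>>)%VS.
  rewrite -(addv_complf <[e]>%VS) subv_add; apply/andP; split.
    by rewrite -memvE memv_span // !inE eqxx !orbT.
  rewrite -/C -Sb; apply: sub_span => v; rewrite !inE => /orP [/eqP->|/eqP->];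
    by rewrite eqxx ?orbT.
have [a ha] := inW _ (W1 x y x).
have [b hb] := inW _ (W1 x y y).
case: (eqVneq a 0) => [a0|anz]; last first.
  by right; apply: (final tri alt jac Hd Hsp enz eA ha hb anz).
case: (eqVneq b 0) => [b0|bnz].
  suff W0 : W = 0%VS by move: Wn0; rewrite W0 eqxx.
  apply/eqP; rewrite -subv0; apply: Wsub => u v w.
  pose Xe := [tuple x; y; e].
  have Xesp z : z \in <<Xe>>%VS by apply: (subvP Hsp); apply: memvf.
  apply: (tri_mem Xesp (psl1 tri) (psl2 tri) (psl3 tri)) => i j k.
  have eB u' v' : p u' e v' = 0 by rewrite (pskew tri alt) eA oppr0.
  have eC u' v' : p u' v' e = 0 by have := jac u' v' e; rewrite eB eA !addr0.
  have h1 : p x y x = 0 by rewrite ha a0 scale0r.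
  have h2 : p x y y = 0 by rewrite hb b0 scale0r.
  have h3 : p y x x = 0 by rewrite (pskew tri alt) h1 oppr0.
  have h4 : p y x y = 0 by rewrite (pskew tri alt) h2 oppr0.
  rewrite memv0.
  case: i => [[|[|[|//]]] Hi]; case: j => [[|[|[|//]]] Hj]; case: k => [[|[|[|//]]] Hk];
    by rewrite /= ?alt ?eA ?eB ?eC ?h1 ?h2 ?h3 ?h4.
right; apply: (@final F V p tri alt jac Hd y x e (- b) (- a)) => //.
- rewrite (eq_span (Y := [:: x; y; e])) // => v.
  by rewrite !inE orbA (orbC (v == y)) -orbA.
- by rewrite (pskew tri alt) hb scaleNr.
- by rewrite (pskew tri alt) ha scaleNr.
- by rewrite oppr_eq0.
Qed.
End Main.

Theorem mainTheorem3 (F : fieldType) (V : vectType F) (p : triprod V) :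
  ~~ (2 \in [pchar F])%N ->
  is_LTS p -> nilpotent_LTS p -> \dim (fullv : {vspace V}) = 3%N ->
  (LTS_iso p (@T31 F) /\ ~ LTS_iso p (@T32 F)) \/
  (~ LTS_iso p (@T31 F) /\ LTS_iso p (@T32 F)).
Proof.
move=> _ [tri alt jac _] nil Hd.
exact: (main_res tri alt jac nil Hd).
Qed.
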